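(* Let $\mathcal{X}=\{1,\dots,n\}$, let $\pi$ be a strictly positive probability distribution on $\mathcal{X}$, let $P$ be a $\pi$-reversible transition matrix, let $G$ be the Gibbs kernel induced by a partition $\mathcal{X}=\bigsqcup_{i=1}^k\mathcal{O}_i$, and for $\alpha\in[0,1]$ let $A_\alpha=\alpha P+(1-\alpha)G$. Then $$\|A_\alpha-\Pi\|_{F,\pi}^2=2\alpha(1-\alpha)\operatorname{Tr}(\overline{P})+\alpha^2\operatorname{Tr}(P^2)+(1-\alpha)^2k-1.$$
   Context: $\pi$-reversible means $\pi(x)P(x,y)=\pi(y)P(y,x)$ for all $x,y$. The Gibbs kernel is $G(x,y)=\pi(y)/\pi(\mathcal{O}(x))$ if $y\in\mathcal{O}(x)$ and $0$ otherwise, where $\mathcal{O}(x)$ is the block containing $x$ and $\pi(\mathcal{O})=\sum_{z\in\mathcal{O}}\pi(z)$. $\overline{P}$ is the $k\times k$ projection chain $\overline{P}(i,j)=\frac{1}{\pi(\mathcal{O}_i)}\sum_{x\in\mathcal{O}_i,\,y\in\mathcal{O}_j}\pi(x)P(x,y)$. $\Pi$ is the $n\times n$ matrix with every row equal to $\pi$. For $n\times n$ real matrices, $\|M\|_{F,\pi}^2=\operatorname{Tr}(M^*M)$, where $M^*$ is the adjoint of $M$ in $\ell^2(\pi)$, i.e. $M^*(x,y)=\pi(y)M(y,x)/\pi(x)$. *)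

(* Defs.v *)
From HB Require Import structures.
From mathcomp Require Import all_boot all_order all_algebra.
Set Implicit Arguments. Unset Strict Implicit. Unset Printing Implicit Defensive.
Import Order.TTheory GRing.Theory Num.Theory.
Local Open Scope ring_scope.

Section Defs.
Variables (R : realFieldType) (n k : nat).

Definition prob_pos (pi : 'I_n -> R) : Prop :=
  (forall x, 0 < pi x) /\ \sum_(x < n) pi x = 1.

Definition transition (P : 'M[R]_n) : Prop :=
  (forall x y, 0 <= P x y) /\ (forall x, \sum_(y < n) P x y = 1).

Definition reversible (pi : 'I_n -> R) (P : 'M[R]_n) : Prop :=
  forall x y, pi x * P x y = pi y * P y x.

(* a partition of 'I_n into k (nonempty) blocks O_i = blk^{-1}(i) *)
Definition partition_map (blk : 'I_n -> 'I_k) : Prop :=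
  forall i : 'I_k, exists x : 'I_n, blk x = i.

Definition piO (pi : 'I_n -> R) (blk : 'I_n -> 'I_k) (i : 'I_k) : R :=
  \sum_(z < n | blk z == i) pi z.

Definition gibbs (pi : 'I_n -> R) (blk : 'I_n -> 'I_k) : 'M[R]_n :=
  \matrix_(x, y) (if blk y == blk x then pi y / piO pi blk (blk x) else 0).

Definition proj_chain (pi : 'I_n -> R) (blk : 'I_n -> 'I_k) (P : 'M[R]_n)
  : 'M[R]_k :=
  \matrix_(i, j) ((piO pi blk i)^-1 *
     \sum_(x < n | blk x == i) \sum_(y < n | blk y == j) pi x * P x y).

Definition PiM (pi : 'I_n -> R) : 'M[R]_n := \matrix_(x, y) pi y.

Definition adjoint (pi : 'I_n -> R) (M : 'M[R]_n) : 'M[R]_n :=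
  \matrix_(x, y) (pi y * M y x / pi x).

Definition frob2 (pi : 'I_n -> R) (M : 'M[R]_n) : R :=
  \tr (adjoint pi M *m M).

End Defs.

(* Main.v *)
Require Import Defs.
From HB Require Import structures.
From mathcomp Require Import all_boot all_order all_algebra.
From mathcomp Require Import ring.
Import Order.TTheory GRing.Theory Num.Theory.
Local Open Scope ring_scope.

Lemma piO_gt0 {R : realFieldType} {n k : nat} { pi : 'I_n -> R } { blk : 'I_n -> 'I_k } :
  prob_pos pi -> partition_map blk -> forall i, 0 < piO pi blk i.
Proof.
move=> [pp _] pm i; have [x hx] := pm i.
rewrite /piO (bigD1 x) /=; last by rewrite hx.
apply: ltr_wpDr; last exact: pp.
by apply: sumr_ge0 => z _; apply/ltW.
Qed.

Lemma adjoint_rev (R : realFieldType) (n : nat) (pi : 'I_n -> R) (M : 'M[R]_n) :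
  (forall x, 0 < pi x) -> (forall x y, pi x * M x y = pi y * M y x) ->
  adjoint pi M = M.
Proof.
move=> pp rv; apply/matrixP => x y; rewrite !mxE -rv mulrC mulrA mulVf ?mul1r //.
by rewrite gt_eqF.
Qed.

Lemma sum_blk (R : realFieldType) (n k : nat) (pi : 'I_n -> R) (blk : 'I_n -> 'I_k) (i : 'I_k) (c : R) :
  0 < piO pi blk i ->
  \sum_(z < n | blk z == i) pi z * (c / piO pi blk i) = c.
Proof.
move=> h; rewrite -mulr_suml -/(piO pi blk i) mulrCA mulfV ?mulr1 //.
by rewrite gt_eqF.
Qed.

Theorem proposition4p2 (R : realFieldType) (n k : nat)
  (pi : 'I_n -> R) (P : 'M[R]_n) (blk : 'I_n -> 'I_k) (alpha : R) :
  prob_pos pi -> transition P -> reversible pi P -> partition_map blk ->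
  0 <= alpha <= 1 ->
  frob2 pi (alpha *: P + (1 - alpha) *: gibbs pi blk - PiM pi) =
    2 * alpha * (1 - alpha) * \tr (proj_chain pi blk P)
    + alpha ^+ 2 * \tr (P *m P) + (1 - alpha) ^+ 2 * k%:R - 1.
Proof.
move=> hpi [_ hP] hrv hpm _.
have hO := piO_gt0 hpi hpm.
have [pp p1] := hpi.
set G := gibbs pi blk; set Pi := PiM pi.
have Grv : forall x y, pi x * G x y = pi y * G y x.
  move=> x y; rewrite !mxE eq_sym; case: eqP => [->|_]; last by rewrite !mulr0.
  by rewrite mulrCA.
have Grow : forall x, \sum_y G x y = 1.
  move=> x; rewrite (eq_bigr (fun y => if blk y == blk x then pi y * (1 / piO pi blk (blk x)) else 0)).
    by rewrite -big_mkcond sum_blk.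
  by move=> y _; rewrite mxE mul1r.
have PPi : P *m Pi = Pi.
  apply/matrixP => x y; rewrite !mxE (eq_bigr (fun z => P x z * pi y)).
    by rewrite -mulr_suml hP mul1r.
  by move=> z _; rewrite mxE.
have PiP : Pi *m P = Pi.
  apply/matrixP => x y; rewrite !mxE (eq_bigr (fun z => pi y * P y z)).
    by rewrite -mulr_sumr hP mulr1.
  by move=> z _; rewrite mxE hrv.
have PiPi : Pi *m Pi = Pi.
  apply/matrixP => x y; rewrite !mxE (eq_bigr (fun z => pi z * pi y)).
    by rewrite -mulr_suml p1 mul1r.
  by move=> z _; rewrite !mxE.
have GPi : G *m Pi = Pi.
  apply/matrixP => x y; rewrite !mxE (eq_bigr (fun z => G x z * pi y)).
    by rewrite -mulr_suml Grow mul1r.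
  by move=> z _; rewrite !mxE.
have PiG : Pi *m G = Pi.
  apply/matrixP => x y; rewrite !mxE (eq_bigr (fun z => pi y * G y z)).
    by rewrite -mulr_sumr Grow mulr1.
  by move=> z _; rewrite mxE Grv.
have GG : G *m G = G.
  apply/matrixP => x y; rewrite [LHS]mxE.
  rewrite (eq_bigr (fun z => if blk z == blk x then pi z * (G x y / piO pi blk (blk x)) else 0)).
    by rewrite -big_mkcond sum_blk.
  move=> z _; rewrite !mxE; case: eqP => [->|]; last by rewrite mul0r.
  by case: (blk y == blk x); [ring | rewrite !(mulr0, mul0r)].
have trPi : \tr Pi = 1 by rewrite /mxtrace (eq_bigr pi) // => x _; rewrite mxE.
have trG : \tr G = k%:R.
  rewrite /mxtrace (partition_big blk predT) //=.
  rewrite (eq_bigr (fun _ => 1)); first by rewrite sumr_const card_ord.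
  move=> i _; rewrite (eq_bigr (fun x => pi x * (1 / piO pi blk i))) ?sum_blk //.
  by move=> x /eqP hx; rewrite mxE eqxx hx mul1r.
have trPG : \tr (P *m G) = \tr (proj_chain pi blk P).
  rewrite /mxtrace (partition_big blk predT) //=; apply: eq_bigr => i _.
  rewrite [RHS]mxE mulr_sumr; apply: eq_bigr => x /eqP hx; rewrite [LHS]mxE.
  rewrite [RHS]mulr_sumr [RHS]big_mkcond /=; apply: eq_bigr => y _.
  rewrite [G y x]mxE hx eq_sym; case: eqP => [->|]; last by rewrite mulr0.
  by rewrite mulrCA mulrA mulrC.
have Arv : forall x y, pi x * (alpha *: P + (1 - alpha) *: G - Pi) x y
     = pi y * (alpha *: P + (1 - alpha) *: G - Pi) y x.
  have E : forall x y, (alpha *: P + (1-alpha) *: G - Pi) x y = alpha * P x y + (1-alpha) * G x y - pi y.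
    by move=> x y; rewrite !mxE.
  move=> x y; rewrite !E !mulrDr !mulrN ![pi _ * (_ * _)]mulrCA.
  by rewrite [pi x * P x y]hrv [pi x * G x y]Grv (mulrC (pi x)).
rewrite /frob2 adjoint_rev //.
rewrite !mulmxDl !mulmxDr ?mulNmx ?mulmxN ?opprK.
rewrite -!scalemxAl -!scalemxAr !scalerA PPi PiP PiPi GPi PiG GG.
rewrite -!scaleNr !mxtraceD !mxtraceZ trPi trG (mxtrace_mulC G P) trPG.
ring.
Qed.
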